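(* Let $\mathcal{P}$ be a finite collection of parameterizations of vector cycles of length 5 in $\mathbb{Z}^3$. Then there exists some $t \in T$ that is not represented by any parameterization in $\mathcal{P}$.
   Context: $T$ is the set of positive integers $t \equiv 2 \pmod 4$ whose square-free part has at least one odd prime factor $p$ with $p \equiv 2 \pmod 3$. A parameterization of a vector cycle of length 5 in $\mathbb{Z}^3$ is a list of five vectors $w_1, \ldots, w_5$ whose coordinates are integer linear forms $\lambda x + \mu y$ ($\lambda, \mu \in \mathbb{Z}$) in two variables $x, y$, such that $w_1 + \cdots + w_5 = \mathbf{0}$ identically and the squared Euclidean norms $|w_1|^2, \ldots, |w_5|^2$ are all equal to one and the same binary quadratic form $F(x,y) = ax^2 + bxy + cy^2$. Such a parameterization represents a positive integer $t$ if there exist integers $x, y$ with $F(x,y) = t$ (i.e., substituting these $x,y$ yields five vectors of $\mathbb{Z}^3$, each of magnitude $\sqrt{t}$, summing to zero). *)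

(* Defs.v *)
From mathcomp Require Import all_boot all_order all_algebra.
Set Implicit Arguments. Unset Strict Implicit. Unset Printing Implicit Defensive.
Import Order.TTheory GRing.Theory Num.Theory.
Local Open Scope ring_scope.

Definition linform := (int * int)%type.
Definition eval_lf (l : linform) (x y : int) : int := l.1 * x + l.2 * y.

(* A list of five vectors of Z^3 whose coordinates are linear forms:
   w i k is the k-th coordinate of w_(i+1). *)
Definition vec5param := 'I_5 -> 'I_3 -> linform.

Definition sqnorm (w : vec5param) (i : 'I_5) (x y : int) : int :=
  \sum_(k < 3) (eval_lf (w i k) x y) ^+ 2.

Definition binqf := (int * int * int)%type.
Definition eval_qf (F : binqf) (x y : int) : int :=
  F.1.1 * x ^+ 2 + F.1.2 * x * y + F.2 * y ^+ 2.

Definition is_cycle5_param (w : vec5param) (F : binqf) : Prop :=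
  (forall (k : 'I_3) (x y : int), \sum_(i < 5) eval_lf (w i k) x y = 0) /\
  (forall (i : 'I_5) (x y : int), sqnorm w i x y = eval_qf F x y).

Definition represents (F : binqf) (t : nat) : Prop :=
  exists x y : int, eval_qf F x y = t%:Z.

Definition sqfree_part (t : nat) : nat :=
  (\prod_(p <- primes t) p ^ (odd (logn p t)))%N.

Definition inT (t : nat) : Prop :=
  ((0 < t) /\ t = 2 %[mod 4] /\
  exists p : nat, [/\ prime p, odd p, p %| sqfree_part t & p = 2 %[mod 3]])%N.

(* Main.v *)
Require Import Defs.
From mathcomp Require Import all_boot all_order all_algebra.
From mathcomp Require Import all_boot all_order all_algebra all_field zify ring lra.
Set Implicit Arguments. Unset Strict Implicit. Unset Printing Implicit Defensive.
Import Order.TTheory GRing.Theory Num.Theory.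
Local Open Scope ring_scope.

Lemma Fp_sos (q : nat) (u v : 'F_q) : prime q -> (q %% 4 = 3)%N ->
  u ^+ 2 + v ^+ 2 = 0 -> v = 0.
Proof.
move=> pq q3 h; apply/eqP; apply/negPn/negP => v0.
set w := u / v.
have w2 : w ^+ 2 = -1.
  have hu : u ^+ 2 = - v ^+ 2 by apply/eqP; rewrite -addr_eq0 h.
  by rewrite /w expr_div_n hu mulNr divff // expf_neq0.
have w0 : w != 0 by apply/eqP => w0; move: w2; rewrite w0 expr0n /= => /eqP; rewrite eq_sym oppr_eq0 oner_eq0.
have hq : q = (4 * (q %/ 4) + 3)%N by rewrite {1}(divn_eq q 4) q3 mulnC.
have e1 : w ^+ q = w by have := expf_card w; rewrite card_Fp.
set r := (q %/ 4)%N in hq.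
have e2 : w ^+ (4 * r + 3) = w * (-1).
  have -> : (4 * r + 3 = 2 * (2 * r + 1) + 1)%N by lia.
  by rewrite exprD expr1 exprM w2 exprD exprM sqrrN !expr1n mul1r expr1 mulrC.
rewrite -hq e1 in e2; move: e2 => /eqP; rewrite -subr_eq0 mulrN1 opprK -mulr2n -mulr_natr mulf_eq0 (negbTE w0) /=.
rewrite -(dvdn_pcharf (pchar_Fp pq)) => /(dvdn_leq (isT : (0 < 2)%N)) => q2.
by move: q3; have : (q <= 2)%N := q2; case: q {u v w w2 w0 e1 r hq pq h v0 q2} => [|[|[|]]].
Qed.

Lemma core_field (F : fieldType) (S : forall u v : F, u ^+ 2 + v ^+ 2 = 0 -> v = 0)
  (A B C k x y : F) : k != 0 -> A * C - B ^+ 2 = k ^+ 2 ->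
  A * x ^+ 2 + 2 * B * x * y + C * y ^+ 2 = 0 -> x = 0 /\ y = 0.
Proof.
move=> k0 hD hQ.
have S' : forall u v : F, u ^+ 2 + v ^+ 2 = 0 -> u = 0 by move=> u v; rewrite addrC; apply: S.
have [A0|A0] := eqVneq A 0.
  have [C0|C0] := eqVneq C 0.
    exfalso; move: hD; rewrite A0 C0 mul0r sub0r => /eqP; rewrite eq_sym -subr_eq0 opprK => /eqP/S'/eqP.
    by rewrite (negbTE k0).
  have e : (C * y + B * x) ^+ 2 + (k * x) ^+ 2 = C * (A * x ^+ 2 + 2 * B * x * y + C * y ^+ 2).
    by rewrite exprMn -hD; ring.
  rewrite hQ mulr0 in e.
  have /eqP := S _ _ e; rewrite mulf_eq0 (negbTE k0) /= => /eqP x0.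
  have := S' _ _ e; rewrite x0 mulr0 addr0 => /eqP; rewrite mulf_eq0 (negbTE C0) /= => /eqP.
  by [].
have e : (A * x + B * y) ^+ 2 + (k * y) ^+ 2 = A * (A * x ^+ 2 + 2 * B * x * y + C * y ^+ 2).
  by rewrite exprMn -hD; ring.
rewrite hQ mulr0 in e.
have /eqP := S _ _ e; rewrite mulf_eq0 (negbTE k0) /= => /eqP y0.
have := S' _ _ e; rewrite y0 mulr0 addr0 => /eqP; rewrite mulf_eq0 (negbTE A0) /= => /eqP.
by [].
Qed.

Lemma prime3mod4 (m : nat) : (m %% 4 = 3)%N -> exists q, [/\ prime q, (q %% 4 = 3)%N & (q %| m)%N].
Proof.
elim: m {-2}m (leqnn m) => [|N IH] m hm m3; first by move: hm; rewrite leqn0 => /eqP e; rewrite e in m3.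
have m1 : (1 < m)%N by lia.
have [pm|npm] := boolP (prime m); first by exists m; split.
have pp := pdiv_prime m1.
have pd := pdiv_dvd m.
set p := pdiv m in pp pd.
have pm' : (p < m)%N.
  have := pdiv_leq (ltnW m1); rewrite leq_eqVlt => /orP[/eqP e|//].
  by move: npm; rewrite -/p -e pp.
have [r hr] : exists r, m = (r * p)%N by exists (m %/ p)%N; rewrite divnK.
have p0 : (0 < p)%N by apply: prime_gt0.
have hp : (p %% 4 = 1)%N \/ (p %% 4 = 3)%N.
  have h2 : ~~ (2 %| p)%N.
    apply/negP => h2; have := dvdn_trans h2 pd; rewrite /dvdn => /eqP; lia.
  move: h2; rewrite /dvdn => /eqP h2; lia.
case: hp => hp; last by exists p; split.
have r3 : (r %% 4 = 3)%N.
  by move: m3; rewrite hr -modnMm hp muln1 modn_mod.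
have rN : (r <= N)%N.
  rewrite -ltnS; apply: leq_trans hm; rewrite hr.
  rewrite -[X in (X < _)%N]muln1 ltn_mul2l ltn_neqAle prime_gt1 // andbT.
  by case: r hr r3 => [|r] //= _ _; rewrite lt0n.
have [q [q1 q2 q3]] := IH r rN r3.
exists q; split => //; rewrite hr; exact: dvdn_mulr.
Qed.

Lemma nondeg_nat (d : nat) : (0 < d)%N -> exists q k m',
  [/\ prime q, (q %% 4 = 3)%N, ~~ (q %| k)%N, (q %| m')%N &
      ((d + m' = k ^ 2)%N \/ (k ^ 2 + m' = d)%N)].
Proof.
move=> d0.
have [e [r [hd hr]]] : exists e r, d = (8 * e + r)%N /\ (r < 8)%N.
  by exists (d %/ 8)%N, (d %% 8)%N; split; [rewrite {1}(divn_eq d 8) mulnC | rewrite ltn_mod].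
have fin : forall k m m' : nat, (m %% 4 = 3)%N -> (m %| m')%N ->
   ((d + m' = k ^ 2)%N \/ (k ^ 2 + m' = d)%N) ->
   (forall q, prime q -> (q %% 4 = 3)%N -> (q %| k)%N -> (q %| d)%N -> False) ->
   exists q k m', [/\ prime q, (q %% 4 = 3)%N, ~~ (q %| k)%N, (q %| m')%N &
      ((d + m' = k ^ 2)%N \/ (k ^ 2 + m' = d)%N)].
  move=> k m m' m3 mm' hrel hk.
  have [q [q1 q2 q3]] := prime3mod4 m3.
  have qm' : (q %| m')%N := dvdn_trans q3 mm'.
  exists q, k, m'; split => //.
  apply/negP => qk; apply: (hk q) => //.
  have qk2 : (q %| k ^ 2)%N by rewrite dvdn_exp.
  case: hrel => hrel.
    by rewrite -(dvdn_addr d qm') addnC hrel.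
  by rewrite -hrel dvdn_add.
have small : forall q c : nat, prime q -> (q %% 4 = 3)%N -> (c <= 2)%N -> (q %| c)%N -> c = 0%N.
  move=> q c pq q3 c2 qc; case: c c2 qc => // c c2 qc.
  by have := dvdn_leq (isT : (0 < c.+1)%N) qc; lia.
case: r hr hd => [|[|[|[|[|[|[|[|//]]]]]]]] _ hd.
- apply: (fin 1%N (d - 1)%N (d - 1)%N) => //; first lia.
  + by right; rewrite hd; lia.
  + by move=> q pq q3 /(small q 1%N pq q3 (isT : (1 <= 2)%N)).
- apply: (fin (16 * e + 4)%N (256 * e * e + 120 * e + 15)%N (256 * e * e + 120 * e + 15)%N) => //; first lia.
  + by left; rewrite hd; lia.
  + move=> q pq q3 qk qd; have : (q %| 2 * d + 2)%N by rewrite hd; have -> : (2 * (8 * e + 1) + 2 = 16 * e + 4)%N by lia.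
    by rewrite dvdn_addr ?dvdn_mull // => /(small q 2%N pq q3 (isT : (2 <= 2)%N)).
- apply: (fin (8 * e + 3)%N (64 * e * e + 40 * e + 7)%N (64 * e * e + 40 * e + 7)%N) => //; first lia.
  + by left; rewrite hd; lia.
  + move=> q pq q3 qk qd; have : (q %| d + 1)%N by rewrite hd; have -> : (8 * e + 2 + 1 = 8 * e + 3)%N by lia.
    by rewrite dvdn_addr // => /(small q 1%N pq q3 (isT : (1 <= 2)%N)).
- apply: (fin (8 * e + 5)%N (32 * e * e + 36 * e + 11)%N (2 * (32 * e * e + 36 * e + 11))%N) => //; first lia.
  + by rewrite dvdn_mull.
  + by left; rewrite hd; lia.
  + move=> q pq q3 qk qd; have : (q %| d + 2)%N by rewrite hd; have -> : (8 * e + 3 + 2 = 8 * e + 5)%N by lia.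
    by rewrite dvdn_addr // => /(small q 2%N pq q3 (isT : (2 <= 2)%N)).
- apply: (fin 1%N (d - 1)%N (d - 1)%N) => //; first lia.
  + by right; rewrite hd; lia.
  + by move=> q pq q3 /(small q 1%N pq q3 (isT : (1 <= 2)%N)).
- apply: (fin (16 * e + 12)%N (256 * e * e + 376 * e + 139)%N (256 * e * e + 376 * e + 139)%N) => //; first lia.
  + by left; rewrite hd; lia.
  + move=> q pq q3 qk qd; have : (q %| 2 * d + 2)%N by rewrite hd; have -> : (2 * (8 * e + 5) + 2 = 16 * e + 12)%N by lia.
    by rewrite dvdn_addr ?dvdn_mull // => /(small q 2%N pq q3 (isT : (2 <= 2)%N)).
- apply: (fin (8 * e + 7)%N (64 * e * e + 104 * e + 43)%N (64 * e * e + 104 * e + 43)%N) => //; first lia.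
  + by left; rewrite hd; lia.
  + move=> q pq q3 qk qd; have : (q %| d + 1)%N by rewrite hd; have -> : (8 * e + 6 + 1 = 8 * e + 7)%N by lia.
    by rewrite dvdn_addr // => /(small q 1%N pq q3 (isT : (1 <= 2)%N)).
- apply: (fin 1%N (4 * e + 3)%N (2 * (4 * e + 3))%N) => //; first lia.
  + by rewrite dvdn_mull.
  + by right; rewrite hd; lia.
  + by move=> q pq q3 /(small q 1%N pq q3 (isT : (1 <= 2)%N)).
Qed.

Definition Qf (A B C x y : int) : int := A * x ^+ 2 + 2 * B * x * y + C * y ^+ 2.

Lemma degen_nat (q c n z : nat) : prime q -> (0 < c < q)%N -> (c * n = z ^ 2)%N ->
  (q %| n)%N -> (q ^ 2 %| n)%N.
Proof.
move=> pq /andP[c0 cq] e qn.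
have qz : (q %| z)%N.
  have : (q %| z ^ 2)%N by rewrite -e dvdn_mull.
  by rewrite Euclid_dvdX // andbT.
have cop : coprime (q ^ 2) c.
  apply: coprimeXl; rewrite prime_coprime //; apply/negP => /(dvdn_leq c0); lia.
by rewrite -(Gauss_dvdr _ cop) e dvdn_exp2r.
Qed.

Lemma good (A B C : int) : 0 <= A * C - B ^+ 2 -> exists q : nat, [/\ prime q, odd q &
  forall x y, (q%:Z %| Qf A B C x y)%Z -> ((q ^ 2)%N%:Z %| Qf A B C x y)%Z].
Proof.
rewrite le_eqVlt => /orP[/eqP D0 | Dpos].
-
  have [q qgt pq] := prime_above (`|A| + `|C| + 2)%N.
  have oq : odd q.
    by case: (even_prime pq) => // q2; move: qgt; rewrite q2; lia.
  exists q; split => // x y.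
  have key : forall c z : int, c != 0 -> (`|c| < q)%N -> c * Qf A B C x y = z ^+ 2 ->
      (q%:Z %| Qf A B C x y)%Z -> ((q ^ 2)%N%:Z %| Qf A B C x y)%Z.
    move=> c z c0 cq e; rewrite /dvdz /= => qn.
    apply: (degen_nat pq _ _ qn (c := `|c|) (z := `|z|)); first by rewrite absz_gt0 c0.
    by rewrite -abszM e abszX.
  have [A0|A0] := eqVneq A 0.
    have B0 : B = 0.
      have h : B ^+ 2 = 0 by move: D0; rewrite A0 mul0r sub0r => /eqP; rewrite eq_sym oppr_eq0 => /eqP.
      by apply/eqP; rewrite -sqrf_eq0 h.
    have [C0|C0] := eqVneq C 0.
      by move=> _; have -> : Qf A B C x y = 0 by rewrite /Qf A0 B0 C0; ring.
    apply: (key C (C * y)) => //; first lia.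
    by rewrite /Qf A0 B0; ring.
  apply: (key A (A * x + B * y)) => //; first lia.
  have hB : B ^+ 2 = A * C by apply/eqP; rewrite -subr_eq0 -oppr_eq0 opprB D0.
  have -> : (A * x + B * y) ^+ 2 = A ^+ 2 * x ^+ 2 + 2 * A * B * x * y + B ^+ 2 * y ^+ 2 by ring.
  by rewrite hB /Qf; ring.
set D := A * C - B ^+ 2 in Dpos *.
have d0 : (0 < `|D|)%N by rewrite absz_gt0 gt_eqF.
have [q [k [m' [pq q3 qk qm' hrel]]]] := nondeg_nat d0.
have oq : odd q by case: (even_prime pq) => // q2; rewrite q2 in q3.
exists q; split => // x y hq.
have pc := pchar_Fp pq.
have [hx hy] : (x%:~R : 'F_q) = 0 /\ (y%:~R : 'F_q) = 0.
  have S : forall u v : 'F_q, u ^+ 2 + v ^+ 2 = 0 -> v = 0 by move=> u v; apply: Fp_sos.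
  apply: (core_field S (A := A%:~R) (B := B%:~R) (C := C%:~R) (k := k%:R)).
  - by rewrite -(dvdn_pcharf pc).
  - have hm : (m'%:R : 'F_q) = 0 by apply/eqP; rewrite -(dvdn_pcharf pc).
    have hD : (D%:~R : 'F_q) = (`|D|%N)%:R by rewrite -[in LHS](gez0_abs (ltW Dpos)).
    have -> : (A%:~R : 'F_q) * C%:~R - B%:~R ^+ 2 = D%:~R by rewrite /D rmorphB rmorphM rmorphXn.
    rewrite hD -natrX.
    by case: hrel => <-; rewrite natrD hm ?addr0 ?add0r.
  - move: hq; rewrite (dvdz_pcharf pc) => /eqP.
    by rewrite /Qf !rmorphD !rmorphM /= !expr2.
have [x1 ->] : exists x1, x = x1 * q%:Z by apply/dvdzP; rewrite (dvdz_pcharf pc) hx.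
have [y1 ->] : exists y1, y = y1 * q%:Z by apply/dvdzP; rewrite (dvdz_pcharf pc) hy.
apply/dvdzP; exists (Qf A B C x1 y1); by rewrite /Qf -mulnn PoszM; ring.
Qed.

Lemma lagr3 (a0 a1 a2 b0 b1 b2 : int) :
  0 <= (0 + a0 ^+ 2 + a1 ^+ 2 + a2 ^+ 2) * (0 + b0 ^+ 2 + b1 ^+ 2 + b2 ^+ 2) -
  (0 + a0 * b0 + a1 * b1 + a2 * b2) ^+ 2.
Proof.
have -> : (0 + a0 ^+ 2 + a1 ^+ 2 + a2 ^+ 2) * (0 + b0 ^+ 2 + b1 ^+ 2 + b2 ^+ 2) -
  (0 + a0 * b0 + a1 * b1 + a2 * b2) ^+ 2 =
  (a0 * b1 - a1 * b0) ^+ 2 + (a0 * b2 - a2 * b0) ^+ 2 + (a1 * b2 - a2 * b1) ^+ 2 by ring.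
by rewrite !addr_ge0 ?sqr_ge0.
Qed.

Lemma L3 (a b : 'I_3 -> int) :
  0 <= (\sum_(k < 3) a k ^+ 2) * (\sum_(k < 3) b k ^+ 2) - (\sum_(k < 3) a k * b k) ^+ 2 /\
  forall x y, \sum_(k < 3) (a k * x + b k * y) ^+ 2 =
    Qf (\sum_(k < 3) a k ^+ 2) (\sum_(k < 3) a k * b k) (\sum_(k < 3) b k ^+ 2) x y.
Proof.
split; last first.
  move=> x y; rewrite /Qf !big_ord_recr !big_ord0 /=.
  move: (a _) (a _) (a _) (b _) (b _) (b _) => a0 a1 a2 b0 b1 b2; ring.
rewrite !big_ord_recr !big_ord0 /=.
move: (a _) (a _) (a _) (b _) (b _) (b _) => a0 a1 a2 b0 b1 b2.
exact: lagr3.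
Qed.

Definition Good (w : vec5param) (q : nat) : Prop :=
  [/\ prime q, odd q & forall x y, (q%:Z %| sqnorm w ord0 x y)%Z ->
       ((q ^ 2)%N%:Z %| sqnorm w ord0 x y)%Z].

Lemma good_w (w : vec5param) : exists q, Good w q.
Proof.
have [hD hQ] := L3 (fun k => (w ord0 k).1) (fun k => (w ord0 k).2).
have [q [pq oq hq]] := good hD.
exists q; split => // x y.
have -> : sqnorm w ord0 x y = Qf (\sum_(k < 3) (w ord0 k).1 ^+ 2)
   (\sum_(k < 3) (w ord0 k).1 * (w ord0 k).2) (\sum_(k < 3) (w ord0 k).2 ^+ 2) x y.
  by rewrite -hQ.
exact: hq.
Qed.

Definition sqf (m : nat) : Prop := forall p, prime p -> ~~ (p ^ 2 %| m)%N.

Lemma build (n : nat) (P : 'I_n -> vec5param * binqf) (s : seq 'I_n) :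
  exists m : nat, [/\ odd m, (5 %| m)%N, sqf m &
    forall j, j \in s -> exists q, Good (P j).1 q /\ (q %| m)%N].
Proof.
elim: s => [|j s [m [om m5 sm hm]]].
  exists 5%N; split => // p pp; apply/negP => h.
  have p5 : (p %| 5)%N by apply: dvdn_trans h; rewrite dvdn_exp.
  move: p5; rewrite dvdn_prime2 // => /eqP pe; move: h; rewrite pe.
  by [].
have [q [pq oq hq]] := good_w (P j).1.
have [qm|qm] := boolP (q %| m)%N.
  exists m; split => // i; rewrite inE => /orP[/eqP ->|js]; first by exists q.
  exact: hm.
exists (q * m)%N; split.
- by rewrite oddM oq om.
- by rewrite dvdn_mull.
- move=> p pp; apply/negP => h.
  have [pq'|pq'] := eqVneq p q.
    move: h; rewrite pq' (expnS q 1) expn1.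
    by rewrite dvdn_pmul2l ?prime_gt0 // (negbTE qm).
  have cop : coprime (p ^ 2) q.
    apply: coprimeXl; rewrite prime_coprime //; apply/negP; rewrite dvdn_prime2 //.
    by apply/negP; rewrite pq'.
  by move: h; rewrite Gauss_dvdr // => h; move: (sm p pp); rewrite h.
- move=> i; rewrite inE => /orP[/eqP ->|js]; first by exists q; split => //; apply: dvdn_mulr.
  by have [q' [g d]] := hm i js; exists q'; split => //; apply: dvdn_mull.
Qed.

Theorem theorem8 (n : nat) (P : 'I_n -> vec5param * binqf) :
  (forall j : 'I_n, is_cycle5_param (P j).1 (P j).2) ->
  exists t : nat, inT t /\ forall j : 'I_n, ~ represents (P j).2 t.
Proof.
move=> hP.
have [m [om m5 sm hm]] := build P (enum 'I_n).
have m0 : (0 < m)%N by case: m om {m5 sm hm}.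
have m2 : (m %% 2 = 1)%N by rewrite modn2 om.
exists (2 * m)%N; split.
  split; first by rewrite muln_gt0.
  split; first by apply/eqP; rewrite eqn_mod_dvd //=; lia.
  exists 5%N; split => //.
  have t0 : (0 < 2 * m)%N by rewrite muln_gt0.
  have l5 : logn 5 (2 * m) = 1%N.
    have h1 : (5 ^ 1 %| 2 * m)%N by rewrite dvdn_mull.
    have h2 : ~~ (5 ^ 2 %| 2 * m)%N.
      rewrite Gauss_dvdr //; exact: sm.
    rewrite (pfactor_dvdn 1 (isT : prime 5) t0) in h1.
    rewrite (pfactor_dvdn 2 (isT : prime 5) t0) in h2.
    lia.
  have p5 : (5 \in primes (2 * m))%N by rewrite mem_primes t0 dvdn_mull.
  rewrite /sqfree_part (big_rem 5%N p5) /= l5 /= expn1.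
  exact: dvdn_mulr.
move=> j [x [y hxy]].
have [hs hn] := hP j.
have [q [[pq oq hq] qm]] := hm j (mem_enum _ j).
have e : sqnorm (P j).1 ord0 x y = (2 * m)%N%:Z by rewrite hn.
have : ((q ^ 2)%N%:Z %| sqnorm (P j).1 ord0 x y)%Z.
  apply: hq; rewrite e /dvdz /=; exact: dvdn_mull.
rewrite e => h; have h' : (q ^ 2 %| 2 * m)%N := h.
rewrite Gauss_dvdr in h'; last first.
  apply: coprimeXl; rewrite prime_coprime //; apply/negP; rewrite dvdn_prime2 //.
  by move=> /eqP q2; move: oq; rewrite q2.
by move: (sm q pq); rewrite h'.
Qed.
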